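(* There exists a $CS(3,K_4^{(3)}+e,gn)$ of type $(g^n:0)$ for each $(g,n)\in\{(5,3),(5,5),(10,2),(15,2)\}$.
   Context: $K_4^{(3)}+e$ denotes the 3-uniform hypergraph with vertex set $\{1,2,3,4,5\}$ and edge set $\{\{1,2,3\},\{1,2,4\},\{1,3,4\},\{2,3,4\},\{3,4,5\}\}$. A $CS(3,K_4^{(3)}+e,gn+s)$ of type $(g^n:s)$ is a quadruple $(X,S,\mathcal{T},\mathcal{A})$ where $|X|=gn+s$, $S\subseteq X$ with $|S|=s$ (the stem), $\mathcal{T}=\{G_1,\dots,G_n\}$ is a partition of $X\setminus S$ into $n$ groups of size $g$, and $\mathcal{A}$ is a collection of hypergraphs on subsets of $X$ (blocks), each isomorphic to $K_4^{(3)}+e$, such that every 3-subset $T\subseteq X$ with $|T\cap(S\cup G_i)|<3$ for all $i$ is an edge of exactly one block, and no 3-subset of any $S\cup G_i$ is an edge of any block. Here $s=0$. *)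

(* Defs.v *)
From mathcomp Require Import all_boot.
Set Implicit Arguments. Unset Strict Implicit. Unset Printing Implicit Defensive.

(* Vertices 1..5 of K_4^(3)+e are encoded as 0..4 in 'I_5. *)
Definition v5 (k : nat) : 'I_5 := inord k.

Definition K4e_edges : {set {set 'I_5}} :=
  [set [set v5 0; v5 1; v5 2]; [set v5 0; v5 1; v5 3]; [set v5 0; v5 2; v5 3];
       [set v5 1; v5 2; v5 3]; [set v5 2; v5 3; v5 4]].

(* A block: a 3-uniform hypergraph on a subset of X (given by its edge set;
   K_4^(3)+e has no isolated vertices) isomorphic to K_4^(3)+e, i.e. the image
   of K4e_edges under an injective vertex map. *)
Definition isK4e (X : finType) (B : {set {set X}}) : Prop :=
  exists f : 'I_5 -> X, injective f /\ B = (fun e : {set 'I_5} => f @: e) @: K4e_edges.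

(* (X, S, P, A) is a CS(3, K_4^(3)+e, gn+s) of type (g^n : s) with X the
   point type (of size gn+s), S the stem, P the set of groups, A the blocks. *)
Definition is_CS_K4e (X : finType) (g n s : nat) (S : {set X})
    (P : {set {set X}}) (A : {set {set {set X}}}) : Prop :=
  [/\ #|X| = g * n + s, #|S| = s,
      partition P (~: S) /\ #|P| = n /\ (forall G, G \in P -> #|G| = g),
      (forall B, B \in A -> isK4e B) &
      (forall T : {set X}, #|T| = 3 ->
         (forall G, G \in P -> #|T :&: (S :|: G)| < 3) ->
         #|[set B in A | T \in B]| = 1) /\
      (forall B, B \in A -> forall E, E \in B -> forall G, G \in P ->
         ~~ (E \subset S :|: G))].

(* Main.v *)
Require Import Defs.
From mathcomp Require Import all_boot zify.
Set Implicit Arguments. Unset Strict Implicit. Unset Printing Implicit Defensive.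

Definition mono (g a b c : nat) := (a %/ g == b %/ g) && (b %/ g == c %/ g).

Definition edgesn (bl : seq nat) : seq (nat * nat * nat) :=
  let v := nth 0 bl in
  [:: (v 0, v 1, v 2); (v 0, v 1, v 3); (v 0, v 2, v 3); (v 1, v 2, v 3); (v 2, v 3, v 4)].

Definition sort3 (e : nat * nat * nat) : nat * nat * nat :=
  let: (a, b, c) := e in
  if a < b then (if b < c then (a, b, c) else if a < c then (a, c, b) else (c, a, b))
  else (if a < c then (b, a, c) else if b < c then (b, c, a) else (c, b, a)).

Arguments sort3 : simpl never.
Definition sedges bl := map sort3 (edgesn bl).

Definition lexle (t u : nat * nat * nat) :=
  let: (a, b, c) := t in let: (x, y, z) := u in
  (a < x) || ((a == x) && ((b < y) || ((b == y) && (c <= z)))).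
Definition lexlt (t u : nat * nat * nat) :=
  let: (a, b, c) := t in let: (x, y, z) := u in
  (a < x) || ((a == x) && ((b < y) || ((b == y) && (c < z)))).

Definition trip N : seq (nat * nat * nat) :=
  [seq (p, z) | p <- [seq (x, y) | x <- iota 0 N, y <- iota 0 N], z <- iota 0 N].
Definition CL g N := [seq t <- trip N | let: (x, y, z) := t in (x < y < z) && ~~ mono g x y z].

Definition blockok (g N : nat) (bl : seq nat) :=
  [&& size bl == 5, uniq bl, all (fun v => v < N) bl &
      all (fun e => let: (a, b, c) := e in ~~ mono g a b c) (edgesn bl)].

Definition good (g n : nat) L :=
  [&& all (blockok g (g * n)) L,
      sort lexle (flatten (map sedges L)) == CL g (g * n) &
      sorted lexlt (CL g (g * n))].


Lemma sort3_spec a b c : uniq [:: a; b; c] ->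
  let: (p, q, r) := sort3 (a, b, c) in sorted ltn [:: p; q; r] /\ [:: p; q; r] =i [:: a; b; c].
Proof.
rewrite /= !inE negb_or andbT => /andP[/andP[ab ac] bc].
rewrite /sort3; repeat case: ifP => ?; split;
  try (by move=> t; rewrite !inE; case: (t == a); case: (t == b); case: (t == c));
  rewrite /= andbT; apply/andP; split; lia.
Qed.

Definition intri (x y z : nat) (e : nat * nat * nat) :=
  let: (a, b, c) := e in
  [&& a \in [:: x; y; z], b \in [:: x; y; z] & c \in [:: x; y; z]].

Lemma sort3_intri x y z a b c : x < y < z -> uniq [:: a; b; c] ->
  (sort3 (a, b, c) == (x, y, z)) = intri x y z (a, b, c).
Proof.
move=> /andP[xy yz] U; have := sort3_spec U.
case: (sort3 (a, b, c)) => [[p q r]] [Hs Hm].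
have Sx : sorted ltn [:: x; y; z] by rewrite /= xy yz.
apply/idP/idP.
  move/eqP=> [ep eq er]; subst p q r.
  by rewrite /intri !Hm !inE !eqxx ?orbT.
move=> /and3P[ha hb hc].
have sub : {subset [:: a; b; c] <= [:: x; y; z]}.
  by move=> t; rewrite mem_seq3 => /or3P[]/eqP ->.
have [_ Hi] := uniq_min_size U sub (leqnn 3).
have E : [:: p; q; r] = [:: x; y; z].
  apply: (irr_sorted_eq ltn_trans ltnn Hs Sx) => t.
  by rewrite Hm Hi.
by case: E => -> -> ->.
Qed.

Lemma lexlt_trans : transitive lexlt.
Proof.
move=> [[a b] c] [[x y] z] [[u v] w] /=.
case/orP=> [h1|/andP[/eqP e1 h1]]; case/orP=> [h2|/andP[/eqP e2 h2]]; subst.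
- by rewrite (ltn_trans h1 h2).
- by rewrite h1.
- by rewrite h2.
- rewrite eqxx ltnn /=.
  case/orP: h1 => [h1|/andP[/eqP e1 h1]]; case/orP: h2 => [h2|/andP[/eqP e2 h2]]; subst.
  + by rewrite (ltn_trans h1 h2).
  + by rewrite h1.
  + by rewrite h2.
  + by rewrite eqxx ltnn (ltn_trans h1 h2) orbT.
Qed.

Lemma lexlt_irr : irreflexive lexlt.
Proof. by move=> [[a b] c] /=; rewrite !ltnn !eqxx. Qed.

Lemma CL_mem g N x y z : x < y < z -> z < N -> ~~ mono g x y z -> (x, y, z) \in CL g N.
Proof.
move=> xyz zN nm; rewrite mem_filter xyz nm /=.
have xN : x < N by lia.
have yN : y < N by lia.
apply: (allpairs_f (fun p z => (p, z))); last by rewrite mem_iota.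
by apply: (allpairs_f pair); rewrite mem_iota.
Qed.

Lemma CL_uniq g N : sorted lexlt (CL g N) -> uniq (CL g N).
Proof. exact: (sorted_uniq lexlt_trans lexlt_irr). Qed.

Lemma sumn_one (T : eqType) (c : T -> nat) (L : seq T) : sumn (map c L) = 1 ->
  exists2 b0, b0 \in L & 0 < c b0 /\ forall b, b \in L -> 0 < c b -> b = b0.
Proof.
elim: L => [|h t IH] //=.
case E: (c h) => [|[|k]] /=.
- move/IH=> [b0 bt [cb H]]; exists b0; first by rewrite inE bt orbT.
  split=> // b; rewrite inE => /orP[/eqP ->|]; first by rewrite E.
  exact: H.
- move=> /eqP; rewrite eqSS => /eqP S0.
  exists h; first by rewrite inE eqxx.
  split; first by rewrite E.
  move=> b; rewrite inE => /orP[/eqP ->//|bt] cb.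
  have : c b <= sumn (map c t).
    elim: t bt {IH S0} => [|u t' IH'] //=; rewrite inE => /orP[/eqP ->|/IH' h']; first exact: leq_addr.
    exact: leq_trans h' (leq_addl _ _).
  by rewrite S0; case: (c b) cb.
- by rewrite addSn.
Qed.


Definition grp (g m i : nat) : {set 'I_m.+1} := [set x : 'I_m.+1 | x %/ g == i].
Definition Pset g n m : {set {set 'I_m.+1}} := [set grp g m i | i : 'I_n].
Definition ev m (bl : seq nat) (k : nat) : 'I_m.+1 := inord (nth 0 bl k).
Definition fb m bl : 'I_5 -> 'I_m.+1 := fun k => ev m bl k.
Definition blk m bl : {set {set 'I_m.+1}} := (fun e : {set 'I_5} => fb m bl @: e) @: K4e_edges.
Definition Aset m L : {set {set {set 'I_m.+1}}} := [set B | B \in map (blk m) L].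

Lemma gpos g n m : g * n = m.+1 -> 0 < g.
Proof. by case: g. Qed.

Lemma divlt g n m (x : 'I_m.+1) : g * n = m.+1 -> x %/ g < n.
Proof. move=> H; rewrite ltn_divLR ?(gpos H) // mulnC H; exact: ltn_ord. Qed.

Lemma inord_val m a : a < m.+1 -> val (inord a : 'I_m.+1) = a.
Proof. exact: inordK. Qed.

Lemma grp_in g n m i : g * n = m.+1 -> i < n -> (inord (i * g) : 'I_m.+1) \in grp g m i.
Proof.
move=> H lt; have gp := gpos H.
have lt2 : i * g < m.+1 by rewrite -H mulnC ltn_pmul2l.
by rewrite inE inord_val // mulnK.
Qed.

Lemma card_grp g n m i : g * n = m.+1 -> i < n -> #|grp g m i| = g.
Proof.
move=> H lt; have gp := gpos H.
have bnd : forall k, k < g -> i * g + k < m.+1.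
  move=> k kg; rewrite -H; have : i.+1 * g <= n * g by rewrite leq_mul2r lt orbT.
  rewrite mulSn; lia.
have -> : grp g m i = [set (inord (i * g + val k) : 'I_m.+1) | k : 'I_g].
  apply/setP=> x; rewrite inE; apply/idP/imsetP.
    move/eqP=> ex; exists (Ordinal (ltn_pmod x gp)) => //.
    apply: val_inj; rewrite /= inord_val; last by apply: bnd; exact: ltn_pmod.
    by rewrite -ex -divn_eq.
  move=> [k _ ->]; rewrite inord_val; last exact: bnd (ltn_ord k).
  by rewrite divnMDl // (divn_small (ltn_ord k)) addn0.
have inj : injective (fun k : 'I_g => (inord (i * g + val k) : 'I_m.+1)).
  move=> k1 k2 /(congr1 val).
  have b1 := bnd _ (ltn_ord k1); have b2 := bnd _ (ltn_ord k2).
  by rewrite !inord_val // => /addnI; apply: val_inj.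
by rewrite (card_imset _ inj) card_ord.
Qed.

Lemma grp_inj g n m : g * n = m.+1 -> injective (fun i : 'I_n => grp g m i).
Proof.
move=> H i j E; have := grp_in H (ltn_ord i); rewrite E inE.
have := grp_in H (ltn_ord i); rewrite inE => /eqP -> /eqP; exact: val_inj.
Qed.

Lemma Pset_part g n m : g * n = m.+1 -> partition (Pset g n m) (~: set0).
Proof.
move=> H; rewrite setC0; apply/and3P; split.
- apply/eqP/setP=> x; rewrite inE; apply/bigcupP.
  exists (grp g m (x %/ g)); last by rewrite inE.
  by apply/imsetP; exists (Ordinal (divlt x H)).
- apply/trivIsetP=> A B /imsetP[i _ ->] /imsetP[j _ ->] neq.
  rewrite -setI_eq0; apply/eqP/setP=> x; rewrite !inE.
  apply/negbTE/negP=> /andP[/eqP xi /eqP xj]; move: neq.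
  have -> : i = j by apply: val_inj; rewrite /= -xi -xj.
  by rewrite eqxx.
- apply/negP=> /imsetP[i _ E]; have := grp_in H (ltn_ord i).
  by rewrite -E inE.
Qed.

Lemma Pset_card g n m : g * n = m.+1 -> #|Pset g n m| = n.
Proof. by move=> H; rewrite card_imset ?card_ord //; exact: grp_inj. Qed.

Lemma Pset_cardG g n m G : g * n = m.+1 -> G \in Pset g n m -> #|G| = g.
Proof. by move=> H /imsetP[i _ ->]; exact: card_grp (ltn_ord i). Qed.


Definition E3 m bl i j k : {set 'I_m.+1} := [set ev m bl i; ev m bl j; ev m bl k].

Lemma blkE m bl : blk m bl =
  [set E3 m bl 0 1 2; E3 m bl 0 1 3; E3 m bl 0 2 3; E3 m bl 1 2 3; E3 m bl 2 3 4].
Proof.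
have fv : forall k, k < 5 -> fb m bl (v5 k) = ev m bl k.
  by move=> k lt; rewrite /fb /v5 inordK.
rewrite /blk /K4e_edges !imsetU !imset_set1 !imsetU !imset_set1 /E3 !fv //.
Qed.

Lemma card3 (T : finType) (u v w : T) : u != v -> u != w -> v != w -> #|[set u; v; w]| = 3.
Proof.
move=> uv uw vw; rewrite -setUA cardsU1 cards2 vw !inE negb_or uv uw.
by [].
Qed.

Lemma inord_eq m a (x : 'I_m.+1) : a < m.+1 -> ((inord a : 'I_m.+1) == x) = (a == val x).
Proof. by move=> lt; rewrite -val_eqE /= inordK. Qed.

Lemma set3_eq m (x y z : 'I_m.+1) a b c :
  val x < val y < val z -> uniq [:: a; b; c] -> all (fun v => v < m.+1) [:: a; b; c] ->
  ([set x; y; z] == [set inord a; inord b; inord c]) = intri x y z (a, b, c).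
Proof.
move=> /andP[xy yz] U /and4P[ha hb hc _].
move: U; rewrite /= !inE negb_or andbT => /andP[/andP[ab ac] bc].
have ne : forall (p q : nat), p < m.+1 -> q < m.+1 -> p != q -> (inord p : 'I_m.+1) != inord q.
  by move=> p q hp hq pq; rewrite -val_eqE /= !inordK.

rewrite eq_sym eqEcard !card3 ?leqnn ?ne //.
- by rewrite andbT !subUset !sub1set !inE !inord_eq // -!orbA -!andbA.
- by rewrite -val_eqE neq_ltn xy.
- by rewrite -val_eqE neq_ltn (ltn_trans xy yz).
- by rewrite -val_eqE neq_ltn yz.
Qed.

Lemma edge_eq g m bl (x y z : 'I_m.+1) i j k :
  val x < val y < val z -> blockok g m.+1 bl -> uniq [:: i; j; k] -> i < 5 -> j < 5 -> k < 5 ->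
  ([set x; y; z] == E3 m bl i j k) =
  ((val x, val y, val z) == sort3 (nth 0 bl i, nth 0 bl j, nth 0 bl k)).
Proof.
move=> xyz /and4P[/eqP sz U /allP A _] uijk hi hj hk.
have U3 : uniq [:: nth 0 bl i; nth 0 bl j; nth 0 bl k].
  move: uijk; rewrite /= !inE !negb_or !andbT !nth_uniq ?sz //.
have B : forall l, l < 5 -> nth 0 bl l < m.+1.
  by move=> l hl; apply: A; apply: mem_nth; rewrite sz.
rewrite /E3 /ev set3_eq //; last by rewrite /= !B.
by rewrite eq_sym sort3_intri.
Qed.

Lemma mem_blk g m bl (x y z : 'I_m.+1) : val x < val y < val z -> blockok g m.+1 bl ->
  ([set x; y; z] \in blk m bl) = ((val x, val y, val z) \in sedges bl).
Proof.
move=> xyz ok; rewrite blkE !inE !(@edge_eq g m bl x y z _ _ _ xyz ok) //.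
rewrite /sedges /edgesn; set s3 := sort3.
by rewrite /= -!orbA.
Qed.


Lemma enum3 m (T : {set 'I_m.+1}) : #|T| = 3 ->
  exists x y z : 'I_m.+1, [/\ val x < val y < val z & T = [set x; y; z]].
Proof.
move=> cT.
have Hs : sorted (relpre val ltn) (enum T).
  rewrite /enum_mem -enumT; apply: sorted_filter.
    by move=> a b c; apply: ltn_trans.
  by rewrite -sorted_map val_enum_ord iota_ltn_sorted.
have sz : size (enum T) = 3 by rewrite -cardE.
move: Hs sz; case E: (enum T) => [|x [|y [|z [|w s]]]] //= /andP[xy /andP[yz _]] _.
exists x, y, z; split; first by rewrite xy yz.
apply/setP=> u; rewrite -mem_enum E !inE.
by rewrite orbA.
Qed.

Lemma not_sub_grp g m a b c i : a < m.+1 -> b < m.+1 -> c < m.+1 -> ~~ mono g a b c ->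
  ~~ ([set inord a; inord b; inord c] \subset grp g m i).
Proof.
move=> ha hb hc nm; apply/negP; rewrite !subUset !sub1set !inE !inordK //.
by move=> /andP[/andP[/eqP ea /eqP eb] /eqP ec]; move: nm; rewrite /mono ea eb ec !eqxx.
Qed.

Lemma main_gen g n m L : g * n = m.+1 -> good g n L ->
  exists (P : {set {set 'I_m.+1}}) (A : {set {set {set 'I_m.+1}}}),
    is_CS_K4e g n 0 set0 P A.
Proof.
move=> H; rewrite /good H => /and3P[/allP Hok /eqP Hsort Hsorted].
exists (Pset g n m), (Aset m L); split.
- by rewrite card_ord addn0 H.
- exact: cards0.
- split; first exact: Pset_part.
  split; first exact: Pset_card.
  by move=> G; exact: Pset_cardG.
- move=> B; rewrite inE => /mapP[bl blL ->].
  have /and4P[/eqP sz U /allP Ab _] := Hok bl blL.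
  exists (fb m bl); split => //.
  move=> k1 k2; rewrite /fb /ev => /(congr1 val).
  have B1 : nth 0 bl k1 < m.+1 by apply: Ab; apply: mem_nth; rewrite sz.
  have B2 : nth 0 bl k2 < m.+1 by apply: Ab; apply: mem_nth; rewrite sz.
  rewrite /= !inordK // => /eqP; rewrite nth_uniq ?sz // => /eqP; exact: val_inj.
- split.
  + move=> T cT HG.
    have [x [y [z [xyz ET]]]] := enum3 cT; subst T.
    have nm : ~~ mono g x y z.
      apply/negP => mo.
      have iP : grp g m (x %/ g) \in Pset g n m by apply/imsetP; exists (Ordinal (divlt x H)).
      have := HG _ iP; rewrite set0U.
      have -> : [set x; y; z] :&: grp g m (x %/ g) = [set x; y; z].
        apply/setIidPl; move: mo; rewrite /mono => /andP[/eqP e1 /eqP e2].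
        by rewrite !subUset !sub1set !inE -e2 -e1 !eqxx.
      rewrite card3 //.
      * by rewrite -val_eqE neq_ltn; case/andP: xyz => ->.
      * by rewrite -val_eqE neq_ltn; case/andP: xyz => xy yz; rewrite (ltn_trans xy yz).
      * by rewrite -val_eqE neq_ltn; case/andP: xyz => _ ->.
    set t := (val x, val y, val z).
    have tC : t \in CL g m.+1 by rewrite /t; apply: CL_mem => //; exact: ltn_ord.
    have cnt : count_mem t (flatten (map sedges L)) = 1.
      rewrite -(permP (permEl (perm_sort lexle _)) (pred1 t)) Hsort.
      by rewrite count_uniq_mem ?tC // CL_uniq.
    rewrite count_flatten -map_comp in cnt.
    have [b0 b0L [c0 Hu]] := sumn_one cnt.
    have mem_iff : forall bl, bl \in L -> ([set x; y; z] \in blk m bl) = (0 < count_mem t (sedges bl)).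
      by move=> bl blL; rewrite (@mem_blk g) ?Hok // -has_count has_pred1.
    rewrite (_ : [set B in Aset m L | [set x; y; z] \in B] = [set blk m b0]) ?cards1 //.
    apply/setP=> B; rewrite !inE; apply/idP/idP.
      case/andP=> /mapP[bl blL ->]; rewrite mem_iff // => cb.
      by rewrite (Hu bl blL cb).
    move/eqP->; rewrite map_f //= mem_iff //.
  + move=> B; rewrite inE => /mapP[bl blL ->] E; rewrite blkE => EB G /imsetP[i _ ->].
    rewrite set0U.
    have /and4P[/eqP sz U /allP Ab Hm] := Hok bl blL.
    have Bd : forall l, l < 5 -> nth 0 bl l < m.+1.
      by move=> l hl; apply: Ab; apply: mem_nth; rewrite sz.
    move: Hm; rewrite /edgesn /= andbT => /and5P[m1 m2 m3 m4 m5].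
    move: EB; rewrite !inE => /orP[/orP[/orP[/orP[|]|]|]|] /eqP -> ; rewrite /E3 /ev;
      apply: not_sub_grp; rewrite ?Bd //.
Qed.

Definition L53 : seq (seq nat) := [:: [:: 5; 14; 4; 8; 3]; [:: 6; 10; 0; 9; 4]; [:: 7; 11; 1; 5; 0]; [:: 8; 12; 2; 6; 1]; [:: 9; 13; 3; 7; 2]; [:: 5; 13; 1; 8; 14]; [:: 6; 14; 2; 9; 10]; [:: 7; 10; 3; 5; 11]; [:: 8; 11; 4; 6; 12]; [:: 9; 12; 0; 7; 13]; [:: 0; 7; 5; 14; 10]; [:: 1; 8; 6; 10; 11]; [:: 2; 9; 7; 11; 12]; [:: 3; 5; 8; 12; 13]; [:: 4; 6; 9; 13; 14]; [:: 0; 7; 1; 10; 5]; [:: 1; 8; 2; 11; 6]; [:: 2; 9; 3; 12; 7]; [:: 3; 5; 4; 13; 8]; [:: 4; 6; 0; 14; 9]; [:: 5; 10; 4; 6; 1]; [:: 6; 11; 0; 7; 2]; [:: 7; 12; 1; 8; 3]; [:: 8; 13; 2; 9; 4]; [:: 9; 14; 3; 5; 0]; [:: 10; 12; 1; 3; 5]; [:: 11; 13; 2; 4; 6]; [:: 12; 14; 3; 0; 7]; [:: 13; 10; 4; 1; 8]; [:: 14; 11; 0; 2; 9]; [:: 0; 1; 8; 9; 14]; [:: 1; 2; 9; 5; 10]; [:: 2; 3; 5; 6; 11]; [:: 3; 4; 6; 7; 12]; [:: 4; 0; 7; 8; 13]; [:: 0; 2; 10; 12; 6]; [:: 1; 3;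 11; 13; 7]; [:: 2; 4; 12; 14; 8]; [:: 3; 0; 13; 10; 9]; [:: 4; 1; 14; 11; 5]; [:: 0; 14; 8; 10; 13]; [:: 1; 10; 9; 11; 14]; [:: 2; 11; 5; 12; 10]; [:: 3; 12; 6; 13; 11]; [:: 4; 13; 7; 14; 12]; [:: 0; 5; 2; 8; 3]; [:: 1; 6; 3; 9; 4]; [:: 2; 7; 4; 5; 0]; [:: 3; 8; 0; 6; 1]; [:: 4; 9; 1; 7; 2]; [:: 0; 1; 13; 14; 5]; [:: 1; 2; 14; 10; 6]; [:: 2; 3; 10; 11; 7]; [:: 3; 4; 11; 12; 8]; [:: 4; 0; 12; 13; 9]; [:: 5; 6; 0; 12; 8]; [:: 6; 7; 1; 13; 9]; [:: 7; 8; 2; 14; 5]; [:: 8; 9; 3; 10; 6]; [:: 9; 5; 4; 11; 7]; [:: 5; 10; 8; 11; 9]; [:: 6; 11; 9; 12; 5]; [:: 7; 12; 5; 13; 6]; [:: 8; 13; 6; 14; 7]; [:: 9; 14; 7; 10; 8]; [:: 5; 14; 1; 6; 11]; [:: 6; 10; 2; 7; 12]; [:: 7; 11; 3; 8; 13]; [:: 8; 12; 4; 9; 14]; [:: 9; 13; 0; 5; 10]; [:: 0; 8; 11; 13; 5]; [:: 1; 9; 12; 14; 6]; [:: 2; 5; 13; 10; 7]; [:: 3; 6; 14; 11; 8]; [:: 4; 7; 10; 12; 9]; [:: 0; 2; 6; 13; 10]; [:: 1; 3; 7; 14; 11]; [:: 2; 4; 8; 10; 12]; [:: 3; 0; 9;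 11; 13]; [:: 4; 1; 5; 12; 14]; [:: 0; 11; 1; 12; 6]; [:: 1; 12; 2; 13; 7]; [:: 2; 13; 3; 14; 8]; [:: 3; 14; 4; 10; 9]; [:: 4; 10; 0; 11; 5]].
Definition L55 : seq (seq nat) := [:: [:: 0; 12; 6; 11; 1]; [:: 5; 17; 11; 16; 6]; [:: 10; 22; 16; 21; 11]; [:: 15; 3; 21; 2; 16]; [:: 20; 8; 2; 7; 21]; [:: 1; 13; 7; 12; 2]; [:: 6; 18; 12; 17; 7]; [:: 11; 23; 17; 22; 12]; [:: 16; 4; 22; 3; 17]; [:: 21; 9; 3; 8; 22]; [:: 2; 14; 8; 13; 3]; [:: 7; 19; 13; 18; 8]; [:: 12; 24; 18; 23; 13]; [:: 17; 0; 23; 4; 18]; [:: 22; 5; 4; 9; 23]; [:: 3; 10; 9; 14; 4]; [:: 8; 15; 14; 19; 9]; [:: 13; 20; 19; 24; 14]; [:: 18; 1; 24; 0; 19]; [:: 23; 6; 0; 5; 24]; [:: 4; 11; 5; 10; 0]; [:: 9; 16; 10; 15; 5]; [:: 14; 21; 15; 20; 10]; [:: 19; 2; 20; 1; 15]; [:: 24; 7; 1; 6; 20]; [:: 0; 1; 6; 21; 9]; [:: 5; 6; 11; 2; 14]; [:: 10; 11; 16; 7; 19]; [:: 15; 16; 21; 12; 24]; [:: 20; 21; 2; 17; 0]; [:: 1; 2; 7; 22; 5]; [:: 6; 7; 12; 3; 10]; [:: 11; 12; 17; 8; 15]; [:: 16; 17; 22; 13; 20]; [:: 21; 22; 3; 18;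 1]; [:: 2; 3; 8; 23; 6]; [:: 7; 8; 13; 4; 11]; [:: 12; 13; 18; 9; 16]; [:: 17; 18; 23; 14; 21]; [:: 22; 23; 4; 19; 2]; [:: 3; 4; 9; 24; 7]; [:: 8; 9; 14; 0; 12]; [:: 13; 14; 19; 5; 17]; [:: 18; 19; 24; 10; 22]; [:: 23; 24; 0; 15; 3]; [:: 4; 0; 5; 20; 8]; [:: 9; 5; 10; 1; 13]; [:: 14; 10; 15; 6; 18]; [:: 19; 15; 20; 11; 23]; [:: 24; 20; 1; 16; 4]; [:: 0; 12; 16; 17; 23]; [:: 5; 17; 21; 22; 4]; [:: 10; 22; 2; 3; 9]; [:: 15; 3; 7; 8; 14]; [:: 20; 8; 12; 13; 19]; [:: 1; 13; 17; 18; 24]; [:: 6; 18; 22; 23; 0]; [:: 11; 23; 3; 4; 5]; [:: 16; 4; 8; 9; 10]; [:: 21; 9; 13; 14; 15]; [:: 2; 14; 18; 19; 20]; [:: 7; 19; 23; 24; 1]; [:: 12; 24; 4; 0; 6]; [:: 17; 0; 9; 5; 11]; [:: 22; 5; 14; 10; 16]; [:: 3; 10; 19; 15; 21]; [:: 8; 15; 24; 20; 2]; [:: 13; 20; 0; 1; 7]; [:: 18; 1; 5; 6; 12]; [:: 23; 6; 10; 11; 17]; [:: 4; 11; 15; 16; 22]; [:: 9; 16; 20; 21; 3]; [:: 14; 21; 1; 2; 8]; [:: 19; 2; 6; 7; 13]; [:: 24; 7; 11; 12; 18]; [:: 0; 16; 18; 4; 7]; [:: 5; 21; 23; 9; 12];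 [:: 10; 2; 4; 14; 17]; [:: 15; 7; 9; 19; 22]; [:: 20; 12; 14; 24; 3]; [:: 1; 17; 19; 0; 8]; [:: 6; 22; 24; 5; 13]; [:: 11; 3; 0; 10; 18]; [:: 16; 8; 5; 15; 23]; [:: 21; 13; 10; 20; 4]; [:: 2; 18; 15; 1; 9]; [:: 7; 23; 20; 6; 14]; [:: 12; 4; 1; 11; 19]; [:: 17; 9; 6; 16; 24]; [:: 22; 14; 11; 21; 0]; [:: 3; 19; 16; 2; 5]; [:: 8; 24; 21; 7; 10]; [:: 13; 0; 2; 12; 15]; [:: 18; 5; 7; 17; 20]; [:: 23; 10; 12; 22; 1]; [:: 4; 15; 17; 3; 6]; [:: 9; 20; 22; 8; 11]; [:: 14; 1; 3; 13; 16]; [:: 19; 6; 8; 18; 21]; [:: 24; 11; 13; 23; 2]; [:: 0; 12; 3; 23; 24]; [:: 5; 17; 8; 4; 0]; [:: 10; 22; 13; 9; 5]; [:: 15; 3; 18; 14; 10]; [:: 20; 8; 23; 19; 15]; [:: 1; 13; 4; 24; 20]; [:: 6; 18; 9; 0; 1]; [:: 11; 23; 14; 5; 6]; [:: 16; 4; 19; 10; 11]; [:: 21; 9; 24; 15; 16]; [:: 2; 14; 0; 20; 21]; [:: 7; 19; 5; 1; 2]; [:: 12; 24; 10; 6; 7]; [:: 17; 0; 15; 11; 12]; [:: 22; 5; 20; 16; 17]; [:: 3; 10; 1; 21; 22]; [:: 8; 15; 6; 2; 3]; [:: 13; 20; 11; 7; 8]; [:: 18; 1; 16; 12; 13]; [::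 23; 6; 21; 17; 18]; [:: 4; 11; 2; 22; 23]; [:: 9; 16; 7; 3; 4]; [:: 14; 21; 12; 8; 9]; [:: 19; 2; 17; 13; 14]; [:: 24; 7; 22; 18; 19]; [:: 0; 11; 4; 14; 15]; [:: 5; 16; 9; 19; 20]; [:: 10; 21; 14; 24; 1]; [:: 15; 2; 19; 0; 6]; [:: 20; 7; 24; 5; 11]; [:: 1; 12; 0; 10; 16]; [:: 6; 17; 5; 15; 21]; [:: 11; 22; 10; 20; 2]; [:: 16; 3; 15; 1; 7]; [:: 21; 8; 20; 6; 12]; [:: 2; 13; 1; 11; 17]; [:: 7; 18; 6; 16; 22]; [:: 12; 23; 11; 21; 3]; [:: 17; 4; 16; 2; 8]; [:: 22; 9; 21; 7; 13]; [:: 3; 14; 2; 12; 18]; [:: 8; 19; 7; 17; 23]; [:: 13; 24; 12; 22; 4]; [:: 18; 0; 17; 3; 9]; [:: 23; 5; 22; 8; 14]; [:: 4; 10; 3; 13; 19]; [:: 9; 15; 8; 18; 24]; [:: 14; 20; 13; 23; 0]; [:: 19; 1; 18; 4; 5]; [:: 24; 6; 23; 9; 10]; [:: 0; 7; 10; 14; 19]; [:: 5; 12; 15; 19; 24]; [:: 10; 17; 20; 24; 0]; [:: 15; 22; 1; 0; 5]; [:: 20; 3; 6; 5; 10]; [:: 1; 8; 11; 10; 15]; [:: 6; 13; 16; 15; 20]; [:: 11; 18; 21; 20; 1]; [:: 16; 23; 2; 1; 6]; [:: 21; 4; 7; 6; 11]; [:: 2; 9; 12; 11; 16]; [:: 7;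 14; 17; 16; 21]; [:: 12; 19; 22; 21; 2]; [:: 17; 24; 3; 2; 7]; [:: 22; 0; 8; 7; 12]; [:: 3; 5; 13; 12; 17]; [:: 8; 10; 18; 17; 22]; [:: 13; 15; 23; 22; 3]; [:: 18; 20; 4; 3; 8]; [:: 23; 1; 9; 8; 13]; [:: 4; 6; 14; 13; 18]; [:: 9; 11; 19; 18; 23]; [:: 14; 16; 24; 23; 4]; [:: 19; 21; 0; 4; 9]; [:: 24; 2; 5; 9; 14]; [:: 0; 1; 16; 8; 10]; [:: 5; 6; 21; 13; 15]; [:: 10; 11; 2; 18; 20]; [:: 15; 16; 7; 23; 1]; [:: 20; 21; 12; 4; 6]; [:: 1; 2; 17; 9; 11]; [:: 6; 7; 22; 14; 16]; [:: 11; 12; 3; 19; 21]; [:: 16; 17; 8; 24; 2]; [:: 21; 22; 13; 0; 7]; [:: 2; 3; 18; 5; 12]; [:: 7; 8; 23; 10; 17]; [:: 12; 13; 4; 15; 22]; [:: 17; 18; 9; 20; 3]; [:: 22; 23; 14; 1; 8]; [:: 3; 4; 19; 6; 13]; [:: 8; 9; 24; 11; 18]; [:: 13; 14; 0; 16; 23]; [:: 18; 19; 5; 21; 4]; [:: 23; 24; 10; 2; 9]; [:: 4; 0; 15; 7; 14]; [:: 9; 5; 20; 12; 19]; [:: 14; 10; 1; 17; 24]; [:: 19; 15; 6; 22; 0]; [:: 24; 20; 11; 3; 5]; [:: 0; 11; 5; 18; 9]; [:: 5; 16; 10; 23; 14]; [:: 10; 21; 15; 4; 19]; [:: 15; 2;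 20; 9; 24]; [:: 20; 7; 1; 14; 0]; [:: 1; 12; 6; 19; 5]; [:: 6; 17; 11; 24; 10]; [:: 11; 22; 16; 0; 15]; [:: 16; 3; 21; 5; 20]; [:: 21; 8; 2; 10; 1]; [:: 2; 13; 7; 15; 6]; [:: 7; 18; 12; 20; 11]; [:: 12; 23; 17; 1; 16]; [:: 17; 4; 22; 6; 21]; [:: 22; 9; 3; 11; 2]; [:: 3; 14; 8; 16; 7]; [:: 8; 19; 13; 21; 12]; [:: 13; 24; 18; 2; 17]; [:: 18; 0; 23; 7; 22]; [:: 23; 5; 4; 12; 3]; [:: 4; 10; 9; 17; 8]; [:: 9; 15; 14; 22; 13]; [:: 14; 20; 19; 3; 18]; [:: 19; 1; 24; 8; 23]; [:: 24; 6; 0; 13; 4]; [:: 0; 7; 6; 17; 1]; [:: 5; 12; 11; 22; 6]; [:: 10; 17; 16; 3; 11]; [:: 15; 22; 21; 8; 16]; [:: 20; 3; 2; 13; 21]; [:: 1; 8; 7; 18; 2]; [:: 6; 13; 12; 23; 7]; [:: 11; 18; 17; 4; 12]; [:: 16; 23; 22; 9; 17]; [:: 21; 4; 3; 14; 22]; [:: 2; 9; 8; 19; 3]; [:: 7; 14; 13; 24; 8]; [:: 12; 19; 18; 0; 13]; [:: 17; 24; 23; 5; 18]; [:: 22; 0; 4; 10; 23]; [:: 3; 5; 9; 15; 4]; [:: 8; 10; 14; 20; 9]; [:: 13; 15; 19; 1; 14]; [:: 18; 20; 24; 6; 19]; [:: 23; 1; 0; 11; 24]; [:: 4; 6; 5;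 16; 0]; [:: 9; 11; 10; 21; 5]; [:: 14; 16; 15; 2; 10]; [:: 19; 21; 20; 7; 15]; [:: 24; 2; 1; 12; 20]; [:: 0; 10; 9; 24; 13]; [:: 5; 15; 14; 0; 18]; [:: 10; 20; 19; 5; 23]; [:: 15; 1; 24; 10; 4]; [:: 20; 6; 0; 15; 9]; [:: 1; 11; 5; 20; 14]; [:: 6; 16; 10; 1; 19]; [:: 11; 21; 15; 6; 24]; [:: 16; 2; 20; 11; 0]; [:: 21; 7; 1; 16; 5]; [:: 2; 12; 6; 21; 10]; [:: 7; 17; 11; 2; 15]; [:: 12; 22; 16; 7; 20]; [:: 17; 3; 21; 12; 1]; [:: 22; 8; 2; 17; 6]; [:: 3; 13; 7; 22; 11]; [:: 8; 18; 12; 3; 16]; [:: 13; 23; 17; 8; 21]; [:: 18; 4; 22; 13; 2]; [:: 23; 9; 3; 18; 7]; [:: 4; 14; 8; 23; 12]; [:: 9; 19; 13; 4; 17]; [:: 14; 24; 18; 9; 22]; [:: 19; 0; 23; 14; 3]; [:: 24; 5; 4; 19; 8]; [:: 0; 20; 10; 23; 1]; [:: 5; 1; 15; 4; 6]; [:: 10; 6; 20; 9; 11]; [:: 15; 11; 1; 14; 16]; [:: 20; 16; 6; 19; 21]; [:: 1; 21; 11; 24; 2]; [:: 6; 2; 16; 0; 7]; [:: 11; 7; 21; 5; 12]; [:: 16; 12; 2; 10; 17]; [:: 21; 17; 7; 15; 22]; [:: 2; 22; 12; 20; 3]; [:: 7; 3; 17; 1; 8]; [:: 12; 8; 22; 6;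 13]; [:: 17; 13; 3; 11; 18]; [:: 22; 18; 8; 16; 23]; [:: 3; 23; 13; 21; 4]; [:: 8; 4; 18; 2; 9]; [:: 13; 9; 23; 7; 14]; [:: 18; 14; 4; 12; 19]; [:: 23; 19; 9; 17; 24]; [:: 4; 24; 14; 22; 0]; [:: 9; 0; 19; 3; 5]; [:: 14; 5; 24; 8; 10]; [:: 19; 10; 0; 13; 15]; [:: 24; 15; 5; 18; 20]; [:: 0; 11; 13; 9; 20]; [:: 5; 16; 18; 14; 1]; [:: 10; 21; 23; 19; 6]; [:: 15; 2; 4; 24; 11]; [:: 20; 7; 9; 0; 16]; [:: 1; 12; 14; 5; 21]; [:: 6; 17; 19; 10; 2]; [:: 11; 22; 24; 15; 7]; [:: 16; 3; 0; 20; 12]; [:: 21; 8; 5; 1; 17]; [:: 2; 13; 10; 6; 22]; [:: 7; 18; 15; 11; 3]; [:: 12; 23; 20; 16; 8]; [:: 17; 4; 1; 21; 13]; [:: 22; 9; 6; 2; 18]; [:: 3; 14; 11; 7; 23]; [:: 8; 19; 16; 12; 4]; [:: 13; 24; 21; 17; 9]; [:: 18; 0; 2; 22; 14]; [:: 23; 5; 7; 3; 19]; [:: 4; 10; 12; 8; 24]; [:: 9; 15; 17; 13; 0]; [:: 14; 20; 22; 18; 5]; [:: 19; 1; 3; 23; 10]; [:: 24; 6; 8; 4; 15]; [:: 0; 21; 15; 18; 4]; [:: 5; 2; 20; 23; 9]; [:: 10; 7; 1; 4; 14]; [:: 15; 12; 6; 9; 19]; [:: 20; 17; 11; 14; 24];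 [:: 1; 22; 16; 19; 0]; [:: 6; 3; 21; 24; 5]; [:: 11; 8; 2; 0; 10]; [:: 16; 13; 7; 5; 15]; [:: 21; 18; 12; 10; 20]; [:: 2; 23; 17; 15; 1]; [:: 7; 4; 22; 20; 6]; [:: 12; 9; 3; 1; 11]; [:: 17; 14; 8; 6; 16]; [:: 22; 19; 13; 11; 21]; [:: 3; 24; 18; 16; 2]; [:: 8; 0; 23; 21; 7]; [:: 13; 5; 4; 2; 12]; [:: 18; 10; 9; 7; 17]; [:: 23; 15; 14; 12; 22]; [:: 4; 20; 19; 17; 3]; [:: 9; 1; 24; 22; 8]; [:: 14; 6; 0; 3; 13]; [:: 19; 11; 5; 8; 18]; [:: 24; 16; 10; 13; 23]; [:: 0; 5; 21; 2; 11]; [:: 5; 10; 2; 7; 16]; [:: 10; 15; 7; 12; 21]; [:: 15; 20; 12; 17; 2]; [:: 20; 1; 17; 22; 7]; [:: 1; 6; 22; 3; 12]; [:: 6; 11; 3; 8; 17]; [:: 11; 16; 8; 13; 22]; [:: 16; 21; 13; 18; 3]; [:: 21; 2; 18; 23; 8]; [:: 2; 7; 23; 4; 13]; [:: 7; 12; 4; 9; 18]; [:: 12; 17; 9; 14; 23]; [:: 17; 22; 14; 19; 4]; [:: 22; 3; 19; 24; 9]; [:: 3; 8; 24; 0; 14]; [:: 8; 13; 0; 5; 19]; [:: 13; 18; 5; 10; 24]; [:: 18; 23; 10; 15; 0]; [:: 23; 4; 15; 20; 5]; [:: 4; 9; 20; 1; 10]; [:: 9; 14; 1; 6; 15]; [::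 14; 19; 6; 11; 20]; [:: 19; 24; 11; 16; 1]; [:: 24; 0; 16; 21; 6]; [:: 0; 2; 7; 24; 16]; [:: 5; 7; 12; 0; 21]; [:: 10; 12; 17; 5; 2]; [:: 15; 17; 22; 10; 7]; [:: 20; 22; 3; 15; 12]; [:: 1; 3; 8; 20; 17]; [:: 6; 8; 13; 1; 22]; [:: 11; 13; 18; 6; 3]; [:: 16; 18; 23; 11; 8]; [:: 21; 23; 4; 16; 13]; [:: 2; 4; 9; 21; 18]; [:: 7; 9; 14; 2; 23]; [:: 12; 14; 19; 7; 4]; [:: 17; 19; 24; 12; 9]; [:: 22; 24; 0; 17; 14]; [:: 3; 0; 5; 22; 19]; [:: 8; 5; 10; 3; 24]; [:: 13; 10; 15; 8; 0]; [:: 18; 15; 20; 13; 5]; [:: 23; 20; 1; 18; 10]; [:: 4; 1; 6; 23; 15]; [:: 9; 6; 11; 4; 20]; [:: 14; 11; 16; 9; 1]; [:: 19; 16; 21; 14; 6]; [:: 24; 21; 2; 19; 11]; [:: 0; 20; 22; 19; 2]; [:: 5; 1; 3; 24; 7]; [:: 10; 6; 8; 0; 12]; [:: 15; 11; 13; 5; 17]; [:: 20; 16; 18; 10; 22]; [:: 1; 21; 23; 15; 3]; [:: 6; 2; 4; 20; 8]; [:: 11; 7; 9; 1; 13]; [:: 16; 12; 14; 6; 18]; [:: 21; 17; 19; 11; 23]; [:: 2; 22; 24; 16; 4]; [:: 7; 3; 0; 21; 9]; [:: 12; 8; 5; 2; 14]; [:: 17; 13; 10; 7; 19]; [:: 22;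 18; 15; 12; 24]; [:: 3; 23; 20; 17; 0]; [:: 8; 4; 1; 22; 5]; [:: 13; 9; 6; 3; 10]; [:: 18; 14; 11; 8; 15]; [:: 23; 19; 16; 13; 20]; [:: 4; 24; 21; 18; 1]; [:: 9; 0; 2; 23; 6]; [:: 14; 5; 7; 4; 11]; [:: 19; 10; 12; 9; 16]; [:: 24; 15; 17; 14; 21]; [:: 0; 11; 7; 19; 22]; [:: 5; 16; 12; 24; 3]; [:: 10; 21; 17; 0; 8]; [:: 15; 2; 22; 5; 13]; [:: 20; 7; 3; 10; 18]; [:: 1; 12; 8; 15; 23]; [:: 6; 17; 13; 20; 4]; [:: 11; 22; 18; 1; 9]; [:: 16; 3; 23; 6; 14]; [:: 21; 8; 4; 11; 19]; [:: 2; 13; 9; 16; 24]; [:: 7; 18; 14; 21; 0]; [:: 12; 23; 19; 2; 5]; [:: 17; 4; 24; 7; 10]; [:: 22; 9; 0; 12; 15]; [:: 3; 14; 5; 17; 20]; [:: 8; 19; 10; 22; 1]; [:: 13; 24; 15; 3; 6]; [:: 18; 0; 20; 8; 11]; [:: 23; 5; 1; 13; 16]; [:: 4; 10; 6; 18; 21]; [:: 9; 15; 11; 23; 2]; [:: 14; 20; 16; 4; 7]; [:: 19; 1; 21; 9; 12]; [:: 24; 6; 2; 14; 17]].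
Definition L102 : seq (seq nat) := [:: [:: 0; 14; 5; 15; 8]; [:: 10; 5; 15; 6; 18]; [:: 1; 15; 6; 16; 9]; [:: 11; 6; 16; 7; 19]; [:: 2; 16; 7; 17; 0]; [:: 12; 7; 17; 8; 10]; [:: 3; 17; 8; 18; 1]; [:: 13; 8; 18; 9; 11]; [:: 4; 18; 9; 19; 2]; [:: 14; 9; 19; 0; 12]; [:: 5; 19; 0; 10; 3]; [:: 15; 0; 10; 1; 13]; [:: 6; 10; 1; 11; 4]; [:: 16; 1; 11; 2; 14]; [:: 7; 11; 2; 12; 5]; [:: 17; 2; 12; 3; 15]; [:: 8; 12; 3; 13; 6]; [:: 18; 3; 13; 4; 16]; [:: 9; 13; 4; 14; 7]; [:: 19; 4; 14; 5; 17]; [:: 0; 14; 6; 18; 1]; [:: 10; 5; 16; 9; 11]; [:: 1; 15; 7; 19; 2]; [:: 11; 6; 17; 0; 12]; [:: 2; 16; 8; 10; 3]; [:: 12; 7; 18; 1; 13]; [:: 3; 17; 9; 11; 4]; [:: 13; 8; 19; 2; 14]; [:: 4; 18; 0; 12; 5]; [:: 14; 9; 10; 3; 15]; [:: 5; 19; 1; 13; 6]; [:: 15; 0; 11; 4; 16]; [:: 6; 10; 2; 14; 7]; [:: 16; 1; 12; 5; 17]; [:: 7; 11; 3; 15; 8]; [:: 17; 2; 13; 6; 18]; [:: 8; 12; 4; 16; 9]; [:: 18; 3; 14; 7; 19]; [:: 9; 13; 5; 17; 0]; [:: 19; 4; 15; 8; 10]; [:: 0; 12; 2; 15; 10]; [::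 10; 3; 12; 6; 1]; [:: 1; 13; 3; 16; 11]; [:: 11; 4; 13; 7; 2]; [:: 2; 14; 4; 17; 12]; [:: 12; 5; 14; 8; 3]; [:: 3; 15; 5; 18; 13]; [:: 13; 6; 15; 9; 4]; [:: 4; 16; 6; 19; 14]; [:: 14; 7; 16; 0; 5]; [:: 5; 17; 7; 10; 15]; [:: 15; 8; 17; 1; 6]; [:: 6; 18; 8; 11; 16]; [:: 16; 9; 18; 2; 7]; [:: 7; 19; 9; 12; 17]; [:: 17; 0; 19; 3; 8]; [:: 8; 10; 0; 13; 18]; [:: 18; 1; 10; 4; 9]; [:: 9; 11; 1; 14; 19]; [:: 19; 2; 11; 5; 0]; [:: 0; 13; 1; 14; 6]; [:: 10; 4; 11; 5; 16]; [:: 1; 14; 2; 15; 7]; [:: 11; 5; 12; 6; 17]; [:: 2; 15; 3; 16; 8]; [:: 12; 6; 13; 7; 18]; [:: 3; 16; 4; 17; 9]; [:: 13; 7; 14; 8; 19]; [:: 4; 17; 5; 18; 0]; [:: 14; 8; 15; 9; 10]; [:: 5; 18; 6; 19; 1]; [:: 15; 9; 16; 0; 11]; [:: 6; 19; 7; 10; 2]; [:: 16; 0; 17; 1; 12]; [:: 7; 10; 8; 11; 3]; [:: 17; 1; 18; 2; 13]; [:: 8; 11; 9; 12; 4]; [:: 18; 2; 19; 3; 14]; [:: 9; 12; 0; 13; 5]; [:: 19; 3; 10; 4; 15]; [:: 0; 10; 2; 17; 19]; [:: 10; 1; 12; 8; 0]; [:: 1; 11; 3; 18; 10]; [:: 11;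 2; 13; 9; 1]; [:: 2; 12; 4; 19; 11]; [:: 12; 3; 14; 0; 2]; [:: 3; 13; 5; 10; 12]; [:: 13; 4; 15; 1; 3]; [:: 4; 14; 6; 11; 13]; [:: 14; 5; 16; 2; 4]; [:: 5; 15; 7; 12; 14]; [:: 15; 6; 17; 3; 5]; [:: 6; 16; 8; 13; 15]; [:: 16; 7; 18; 4; 6]; [:: 7; 17; 9; 14; 16]; [:: 17; 8; 19; 5; 7]; [:: 8; 18; 0; 15; 17]; [:: 18; 9; 10; 6; 8]; [:: 9; 19; 1; 16; 18]; [:: 19; 0; 11; 7; 9]; [:: 0; 12; 6; 16; 2]; [:: 10; 3; 16; 7; 12]; [:: 1; 13; 7; 17; 3]; [:: 11; 4; 17; 8; 13]; [:: 2; 14; 8; 18; 4]; [:: 12; 5; 18; 9; 14]; [:: 3; 15; 9; 19; 5]; [:: 13; 6; 19; 0; 15]; [:: 4; 16; 0; 10; 6]; [:: 14; 7; 10; 1; 16]; [:: 5; 17; 1; 11; 7]; [:: 15; 8; 11; 2; 17]; [:: 6; 18; 2; 12; 8]; [:: 16; 9; 12; 3; 18]; [:: 7; 19; 3; 13; 9]; [:: 17; 0; 13; 4; 19]; [:: 8; 10; 4; 14; 0]; [:: 18; 1; 14; 5; 10]; [:: 9; 11; 5; 15; 1]; [:: 19; 2; 15; 6; 11]; [:: 0; 12; 1; 11; 15]; [:: 10; 3; 11; 2; 6]; [:: 1; 13; 2; 12; 16]; [:: 11; 4; 12; 3; 7]; [:: 2; 14; 3; 13; 17]; [:: 12; 5;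 13; 4; 8]; [:: 3; 15; 4; 14; 18]; [:: 13; 6; 14; 5; 9]; [:: 4; 16; 5; 15; 19]; [:: 14; 7; 15; 6; 0]; [:: 5; 17; 6; 16; 10]; [:: 15; 8; 16; 7; 1]; [:: 6; 18; 7; 17; 11]; [:: 16; 9; 17; 8; 2]; [:: 7; 19; 8; 18; 12]; [:: 17; 0; 18; 9; 3]; [:: 8; 10; 9; 19; 13]; [:: 18; 1; 19; 0; 4]; [:: 9; 11; 0; 10; 14]; [:: 19; 2; 10; 1; 5]; [:: 0; 2; 11; 18; 4]; [:: 10; 12; 2; 9; 14]; [:: 1; 3; 12; 19; 5]; [:: 11; 13; 3; 0; 15]; [:: 2; 4; 13; 10; 6]; [:: 12; 14; 4; 1; 16]; [:: 3; 5; 14; 11; 7]; [:: 13; 15; 5; 2; 17]; [:: 4; 6; 15; 12; 8]; [:: 14; 16; 6; 3; 18]; [:: 5; 7; 16; 13; 9]; [:: 15; 17; 7; 4; 19]; [:: 6; 8; 17; 14; 0]; [:: 16; 18; 8; 5; 10]; [:: 7; 9; 18; 15; 1]; [:: 17; 19; 9; 6; 11]; [:: 8; 0; 19; 16; 2]; [:: 18; 10; 0; 7; 12]; [:: 9; 1; 10; 17; 3]; [:: 19; 11; 1; 8; 13]; [:: 0; 3; 16; 18; 6]; [:: 10; 13; 7; 9; 16]; [:: 1; 4; 17; 19; 7]; [:: 11; 14; 8; 0; 17]; [:: 2; 5; 18; 10; 8]; [:: 12; 15; 9; 1; 18]; [:: 3; 6; 19; 11; 9]; [:: 13; 16; 0;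 2; 19]; [:: 4; 7; 10; 12; 0]; [:: 14; 17; 1; 3; 10]; [:: 5; 8; 11; 13; 1]; [:: 15; 18; 2; 4; 11]; [:: 6; 9; 12; 14; 2]; [:: 16; 19; 3; 5; 12]; [:: 7; 0; 13; 15; 3]; [:: 17; 10; 4; 6; 13]; [:: 8; 1; 14; 16; 4]; [:: 18; 11; 5; 7; 14]; [:: 9; 2; 15; 17; 5]; [:: 19; 12; 6; 8; 15]].
Definition L152 : seq (seq nat) := [:: [:: 0; 2; 22; 23; 8]; [:: 15; 17; 8; 9; 23]; [:: 1; 3; 23; 24; 9]; [:: 16; 18; 9; 10; 24]; [:: 2; 4; 24; 25; 10]; [:: 17; 19; 10; 11; 25]; [:: 3; 5; 25; 26; 11]; [:: 18; 20; 11; 12; 26]; [:: 4; 6; 26; 27; 12]; [:: 19; 21; 12; 13; 27]; [:: 5; 7; 27; 28; 13]; [:: 20; 22; 13; 14; 28]; [:: 6; 8; 28; 29; 14]; [:: 21; 23; 14; 0; 29]; [:: 7; 9; 29; 15; 0]; [:: 22; 24; 0; 1; 15]; [:: 8; 10; 15; 16; 1]; [:: 23; 25; 1; 2; 16]; [:: 9; 11; 16; 17; 2]; [:: 24; 26; 2; 3; 17]; [:: 10; 12; 17; 18; 3]; [:: 25; 27; 3; 4; 18]; [:: 11; 13; 18; 19; 4]; [:: 26; 28; 4; 5; 19]; [:: 12; 14; 19; 20; 5]; [:: 27; 29; 5; 6; 20]; [:: 13; 0; 20; 21; 6]; [:: 28; 15; 6; 7; 21]; [:: 14; 1; 21; 22;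 7]; [:: 29; 16; 7; 8; 22]; [:: 0; 17; 16; 10; 2]; [:: 15; 3; 2; 25; 17]; [:: 1; 18; 17; 11; 3]; [:: 16; 4; 3; 26; 18]; [:: 2; 19; 18; 12; 4]; [:: 17; 5; 4; 27; 19]; [:: 3; 20; 19; 13; 5]; [:: 18; 6; 5; 28; 20]; [:: 4; 21; 20; 14; 6]; [:: 19; 7; 6; 29; 21]; [:: 5; 22; 21; 0; 7]; [:: 20; 8; 7; 15; 22]; [:: 6; 23; 22; 1; 8]; [:: 21; 9; 8; 16; 23]; [:: 7; 24; 23; 2; 9]; [:: 22; 10; 9; 17; 24]; [:: 8; 25; 24; 3; 10]; [:: 23; 11; 10; 18; 25]; [:: 9; 26; 25; 4; 11]; [:: 24; 12; 11; 19; 26]; [:: 10; 27; 26; 5; 12]; [:: 25; 13; 12; 20; 27]; [:: 11; 28; 27; 6; 13]; [:: 26; 14; 13; 21; 28]; [:: 12; 29; 28; 7; 14]; [:: 27; 0; 14; 22; 29]; [:: 13; 15; 29; 8; 0]; [:: 28; 1; 0; 23; 15]; [:: 14; 16; 15; 9; 1]; [:: 29; 2; 1; 24; 16]; [:: 0; 18; 6; 29; 1]; [:: 15; 4; 21; 0; 16]; [:: 1; 19; 7; 15; 2]; [:: 16; 5; 22; 1; 17]; [:: 2; 20; 8; 16; 3]; [:: 17; 6; 23; 2; 18]; [:: 3; 21; 9; 17; 4]; [:: 18; 7; 24; 3; 19]; [:: 4; 22; 10; 18; 5]; [:: 19; 8; 25; 4; 20]; [:: 5; 23; 11; 19; 6];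 [:: 20; 9; 26; 5; 21]; [:: 6; 24; 12; 20; 7]; [:: 21; 10; 27; 6; 22]; [:: 7; 25; 13; 21; 8]; [:: 22; 11; 28; 7; 23]; [:: 8; 26; 14; 22; 9]; [:: 23; 12; 29; 8; 24]; [:: 9; 27; 0; 23; 10]; [:: 24; 13; 15; 9; 25]; [:: 10; 28; 1; 24; 11]; [:: 25; 14; 16; 10; 26]; [:: 11; 29; 2; 25; 12]; [:: 26; 0; 17; 11; 27]; [:: 12; 15; 3; 26; 13]; [:: 27; 1; 18; 12; 28]; [:: 13; 16; 4; 27; 14]; [:: 28; 2; 19; 13; 29]; [:: 14; 17; 5; 28; 0]; [:: 29; 3; 20; 14; 15]; [:: 0; 17; 6; 21; 19]; [:: 15; 3; 21; 7; 5]; [:: 1; 18; 7; 22; 20]; [:: 16; 4; 22; 8; 6]; [:: 2; 19; 8; 23; 21]; [:: 17; 5; 23; 9; 7]; [:: 3; 20; 9; 24; 22]; [:: 18; 6; 24; 10; 8]; [:: 4; 21; 10; 25; 23]; [:: 19; 7; 25; 11; 9]; [:: 5; 22; 11; 26; 24]; [:: 20; 8; 26; 12; 10]; [:: 6; 23; 12; 27; 25]; [:: 21; 9; 27; 13; 11]; [:: 7; 24; 13; 28; 26]; [:: 22; 10; 28; 14; 12]; [:: 8; 25; 14; 29; 27]; [:: 23; 11; 29; 0; 13]; [:: 9; 26; 0; 15; 28]; [:: 24; 12; 15; 1; 14]; [:: 10; 27; 1; 16; 29]; [:: 25; 13; 16; 2; 0]; [:: 11; 28; 2; 17; 15]; [::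 26; 14; 17; 3; 1]; [:: 12; 29; 3; 18; 16]; [:: 27; 0; 18; 4; 2]; [:: 13; 15; 4; 19; 17]; [:: 28; 1; 19; 5; 3]; [:: 14; 16; 5; 20; 18]; [:: 29; 2; 20; 6; 4]; [:: 0; 22; 15; 11; 5]; [:: 15; 8; 1; 26; 20]; [:: 1; 23; 16; 12; 6]; [:: 16; 9; 2; 27; 21]; [:: 2; 24; 17; 13; 7]; [:: 17; 10; 3; 28; 22]; [:: 3; 25; 18; 14; 8]; [:: 18; 11; 4; 29; 23]; [:: 4; 26; 19; 0; 9]; [:: 19; 12; 5; 15; 24]; [:: 5; 27; 20; 1; 10]; [:: 20; 13; 6; 16; 25]; [:: 6; 28; 21; 2; 11]; [:: 21; 14; 7; 17; 26]; [:: 7; 29; 22; 3; 12]; [:: 22; 0; 8; 18; 27]; [:: 8; 15; 23; 4; 13]; [:: 23; 1; 9; 19; 28]; [:: 9; 16; 24; 5; 14]; [:: 24; 2; 10; 20; 29]; [:: 10; 17; 25; 6; 0]; [:: 25; 3; 11; 21; 15]; [:: 11; 18; 26; 7; 1]; [:: 26; 4; 12; 22; 16]; [:: 12; 19; 27; 8; 2]; [:: 27; 5; 13; 23; 17]; [:: 13; 20; 28; 9; 3]; [:: 28; 6; 14; 24; 18]; [:: 14; 21; 29; 10; 4]; [:: 29; 7; 0; 25; 19]; [:: 0; 19; 6; 28; 16]; [:: 15; 5; 21; 14; 2]; [:: 1; 20; 7; 29; 17]; [:: 16; 6; 22; 0; 3]; [:: 2; 21; 8; 15; 18]; [:: 17;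 7; 23; 1; 4]; [:: 3; 22; 9; 16; 19]; [:: 18; 8; 24; 2; 5]; [:: 4; 23; 10; 17; 20]; [:: 19; 9; 25; 3; 6]; [:: 5; 24; 11; 18; 21]; [:: 20; 10; 26; 4; 7]; [:: 6; 25; 12; 19; 22]; [:: 21; 11; 27; 5; 8]; [:: 7; 26; 13; 20; 23]; [:: 22; 12; 28; 6; 9]; [:: 8; 27; 14; 21; 24]; [:: 23; 13; 29; 7; 10]; [:: 9; 28; 0; 22; 25]; [:: 24; 14; 15; 8; 11]; [:: 10; 29; 1; 23; 26]; [:: 25; 0; 16; 9; 12]; [:: 11; 15; 2; 24; 27]; [:: 26; 1; 17; 10; 13]; [:: 12; 16; 3; 25; 28]; [:: 27; 2; 18; 11; 14]; [:: 13; 17; 4; 26; 29]; [:: 28; 3; 19; 12; 0]; [:: 14; 18; 5; 27; 15]; [:: 29; 4; 20; 13; 1]; [:: 0; 20; 6; 26; 3]; [:: 15; 6; 21; 12; 18]; [:: 1; 21; 7; 27; 4]; [:: 16; 7; 22; 13; 19]; [:: 2; 22; 8; 28; 5]; [:: 17; 8; 23; 14; 20]; [:: 3; 23; 9; 29; 6]; [:: 18; 9; 24; 0; 21]; [:: 4; 24; 10; 15; 7]; [:: 19; 10; 25; 1; 22]; [:: 5; 25; 11; 16; 8]; [:: 20; 11; 26; 2; 23]; [:: 6; 26; 12; 17; 9]; [:: 21; 12; 27; 3; 24]; [:: 7; 27; 13; 18; 10]; [:: 22; 13; 28; 4; 25]; [:: 8; 28; 14; 19; 11]; [:: 23; 14;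 29; 5; 26]; [:: 9; 29; 0; 20; 12]; [:: 24; 0; 15; 6; 27]; [:: 10; 15; 1; 21; 13]; [:: 25; 1; 16; 7; 28]; [:: 11; 16; 2; 22; 14]; [:: 26; 2; 17; 8; 29]; [:: 12; 17; 3; 23; 0]; [:: 27; 3; 18; 9; 15]; [:: 13; 18; 4; 24; 1]; [:: 28; 4; 19; 10; 16]; [:: 14; 19; 5; 25; 2]; [:: 29; 5; 20; 11; 17]; [:: 0; 15; 2; 19; 25]; [:: 15; 1; 17; 5; 11]; [:: 1; 16; 3; 20; 26]; [:: 16; 2; 18; 6; 12]; [:: 2; 17; 4; 21; 27]; [:: 17; 3; 19; 7; 13]; [:: 3; 18; 5; 22; 28]; [:: 18; 4; 20; 8; 14]; [:: 4; 19; 6; 23; 29]; [:: 19; 5; 21; 9; 0]; [:: 5; 20; 7; 24; 15]; [:: 20; 6; 22; 10; 1]; [:: 6; 21; 8; 25; 16]; [:: 21; 7; 23; 11; 2]; [:: 7; 22; 9; 26; 17]; [:: 22; 8; 24; 12; 3]; [:: 8; 23; 10; 27; 18]; [:: 23; 9; 25; 13; 4]; [:: 9; 24; 11; 28; 19]; [:: 24; 10; 26; 14; 5]; [:: 10; 25; 12; 29; 20]; [:: 25; 11; 27; 0; 6]; [:: 11; 26; 13; 15; 21]; [:: 26; 12; 28; 1; 7]; [:: 12; 27; 14; 16; 22]; [:: 27; 13; 29; 2; 8]; [:: 13; 28; 0; 17; 23]; [:: 28; 14; 15; 3; 9]; [:: 14; 29; 1; 18; 24]; [:: 29; 0; 16;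 4; 10]; [:: 0; 16; 15; 13; 7]; [:: 15; 2; 1; 28; 22]; [:: 1; 17; 16; 14; 8]; [:: 16; 3; 2; 29; 23]; [:: 2; 18; 17; 0; 9]; [:: 17; 4; 3; 15; 24]; [:: 3; 19; 18; 1; 10]; [:: 18; 5; 4; 16; 25]; [:: 4; 20; 19; 2; 11]; [:: 19; 6; 5; 17; 26]; [:: 5; 21; 20; 3; 12]; [:: 20; 7; 6; 18; 27]; [:: 6; 22; 21; 4; 13]; [:: 21; 8; 7; 19; 28]; [:: 7; 23; 22; 5; 14]; [:: 22; 9; 8; 20; 29]; [:: 8; 24; 23; 6; 0]; [:: 23; 10; 9; 21; 15]; [:: 9; 25; 24; 7; 1]; [:: 24; 11; 10; 22; 16]; [:: 10; 26; 25; 8; 2]; [:: 25; 12; 11; 23; 17]; [:: 11; 27; 26; 9; 3]; [:: 26; 13; 12; 24; 18]; [:: 12; 28; 27; 10; 4]; [:: 27; 14; 13; 25; 19]; [:: 13; 29; 28; 11; 5]; [:: 28; 0; 14; 26; 20]; [:: 14; 15; 29; 12; 6]; [:: 29; 1; 0; 27; 21]; [:: 0; 20; 1; 25; 12]; [:: 15; 6; 16; 11; 27]; [:: 1; 21; 2; 26; 13]; [:: 16; 7; 17; 12; 28]; [:: 2; 22; 3; 27; 14]; [:: 17; 8; 18; 13; 29]; [:: 3; 23; 4; 28; 0]; [:: 18; 9; 19; 14; 15]; [:: 4; 24; 5; 29; 1]; [:: 19; 10; 20; 0; 16]; [:: 5; 25; 6; 15; 2]; [:: 20; 11; 21; 1;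 17]; [:: 6; 26; 7; 16; 3]; [:: 21; 12; 22; 2; 18]; [:: 7; 27; 8; 17; 4]; [:: 22; 13; 23; 3; 19]; [:: 8; 28; 9; 18; 5]; [:: 23; 14; 24; 4; 20]; [:: 9; 29; 10; 19; 6]; [:: 24; 0; 25; 5; 21]; [:: 10; 15; 11; 20; 7]; [:: 25; 1; 26; 6; 22]; [:: 11; 16; 12; 21; 8]; [:: 26; 2; 27; 7; 23]; [:: 12; 17; 13; 22; 9]; [:: 27; 3; 28; 8; 24]; [:: 13; 18; 14; 23; 10]; [:: 28; 4; 29; 9; 25]; [:: 14; 19; 0; 24; 11]; [:: 29; 5; 15; 10; 26]; [:: 0; 4; 17; 24; 3]; [:: 15; 19; 3; 10; 18]; [:: 1; 5; 18; 25; 4]; [:: 16; 20; 4; 11; 19]; [:: 2; 6; 19; 26; 5]; [:: 17; 21; 5; 12; 20]; [:: 3; 7; 20; 27; 6]; [:: 18; 22; 6; 13; 21]; [:: 4; 8; 21; 28; 7]; [:: 19; 23; 7; 14; 22]; [:: 5; 9; 22; 29; 8]; [:: 20; 24; 8; 0; 23]; [:: 6; 10; 23; 15; 9]; [:: 21; 25; 9; 1; 24]; [:: 7; 11; 24; 16; 10]; [:: 22; 26; 10; 2; 25]; [:: 8; 12; 25; 17; 11]; [:: 23; 27; 11; 3; 26]; [:: 9; 13; 26; 18; 12]; [:: 24; 28; 12; 4; 27]; [:: 10; 14; 27; 19; 13]; [:: 25; 29; 13; 5; 28]; [:: 11; 0; 28; 20; 14]; [:: 26; 15; 14; 6; 29];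 [:: 12; 1; 29; 21; 0]; [:: 27; 16; 0; 7; 15]; [:: 13; 2; 15; 22; 1]; [:: 28; 17; 1; 8; 16]; [:: 14; 3; 16; 23; 2]; [:: 29; 18; 2; 9; 17]; [:: 0; 19; 21; 11; 6]; [:: 15; 5; 7; 26; 21]; [:: 1; 20; 22; 12; 7]; [:: 16; 6; 8; 27; 22]; [:: 2; 21; 23; 13; 8]; [:: 17; 7; 9; 28; 23]; [:: 3; 22; 24; 14; 9]; [:: 18; 8; 10; 29; 24]; [:: 4; 23; 25; 0; 10]; [:: 19; 9; 11; 15; 25]; [:: 5; 24; 26; 1; 11]; [:: 20; 10; 12; 16; 26]; [:: 6; 25; 27; 2; 12]; [:: 21; 11; 13; 17; 27]; [:: 7; 26; 28; 3; 13]; [:: 22; 12; 14; 18; 28]; [:: 8; 27; 29; 4; 14]; [:: 23; 13; 0; 19; 29]; [:: 9; 28; 15; 5; 0]; [:: 24; 14; 1; 20; 15]; [:: 10; 29; 16; 6; 1]; [:: 25; 0; 2; 21; 16]; [:: 11; 15; 17; 7; 2]; [:: 26; 1; 3; 22; 17]; [:: 12; 16; 18; 8; 3]; [:: 27; 2; 4; 23; 18]; [:: 13; 17; 19; 9; 4]; [:: 28; 3; 5; 24; 19]; [:: 14; 18; 20; 10; 5]; [:: 29; 4; 6; 25; 20]; [:: 0; 22; 4; 20; 27]; [:: 15; 8; 19; 6; 13]; [:: 1; 23; 5; 21; 28]; [:: 16; 9; 20; 7; 14]; [:: 2; 24; 6; 22; 29]; [:: 17; 10; 21; 8; 0]; [::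 3; 25; 7; 23; 15]; [:: 18; 11; 22; 9; 1]; [:: 4; 26; 8; 24; 16]; [:: 19; 12; 23; 10; 2]; [:: 5; 27; 9; 25; 17]; [:: 20; 13; 24; 11; 3]; [:: 6; 28; 10; 26; 18]; [:: 21; 14; 25; 12; 4]; [:: 7; 29; 11; 27; 19]; [:: 22; 0; 26; 13; 5]; [:: 8; 15; 12; 28; 20]; [:: 23; 1; 27; 14; 6]; [:: 9; 16; 13; 29; 21]; [:: 24; 2; 28; 0; 7]; [:: 10; 17; 14; 15; 22]; [:: 25; 3; 29; 1; 8]; [:: 11; 18; 0; 16; 23]; [:: 26; 4; 15; 2; 9]; [:: 12; 19; 1; 17; 24]; [:: 27; 5; 16; 3; 10]; [:: 13; 20; 2; 18; 25]; [:: 28; 6; 17; 4; 11]; [:: 14; 21; 3; 19; 26]; [:: 29; 7; 18; 5; 12]; [:: 0; 15; 8; 25; 9]; [:: 15; 1; 23; 11; 24]; [:: 1; 16; 9; 26; 10]; [:: 16; 2; 24; 12; 25]; [:: 2; 17; 10; 27; 11]; [:: 17; 3; 25; 13; 26]; [:: 3; 18; 11; 28; 12]; [:: 18; 4; 26; 14; 27]; [:: 4; 19; 12; 29; 13]; [:: 19; 5; 27; 0; 28]; [:: 5; 20; 13; 15; 14]; [:: 20; 6; 28; 1; 29]; [:: 6; 21; 14; 16; 0]; [:: 21; 7; 29; 2; 15]; [:: 7; 22; 0; 17; 1]; [:: 22; 8; 15; 3; 16]; [:: 8; 23; 1; 18; 2]; [:: 23; 9; 16; 4; 17]; [:: 9;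 24; 2; 19; 3]; [:: 24; 10; 17; 5; 18]; [:: 10; 25; 3; 20; 4]; [:: 25; 11; 18; 6; 19]; [:: 11; 26; 4; 21; 5]; [:: 26; 12; 19; 7; 20]; [:: 12; 27; 5; 22; 6]; [:: 27; 13; 20; 8; 21]; [:: 13; 28; 6; 23; 7]; [:: 28; 14; 21; 9; 22]; [:: 14; 29; 7; 24; 8]; [:: 29; 0; 22; 10; 23]; [:: 0; 18; 1; 26; 4]; [:: 15; 4; 16; 12; 19]; [:: 1; 19; 2; 27; 5]; [:: 16; 5; 17; 13; 20]; [:: 2; 20; 3; 28; 6]; [:: 17; 6; 18; 14; 21]; [:: 3; 21; 4; 29; 7]; [:: 18; 7; 19; 0; 22]; [:: 4; 22; 5; 15; 8]; [:: 19; 8; 20; 1; 23]; [:: 5; 23; 6; 16; 9]; [:: 20; 9; 21; 2; 24]; [:: 6; 24; 7; 17; 10]; [:: 21; 10; 22; 3; 25]; [:: 7; 25; 8; 18; 11]; [:: 22; 11; 23; 4; 26]; [:: 8; 26; 9; 19; 12]; [:: 23; 12; 24; 5; 27]; [:: 9; 27; 10; 20; 13]; [:: 24; 13; 25; 6; 28]; [:: 10; 28; 11; 21; 14]; [:: 25; 14; 26; 7; 29]; [:: 11; 29; 12; 22; 0]; [:: 26; 0; 27; 8; 15]; [:: 12; 15; 13; 23; 1]; [:: 27; 1; 28; 9; 16]; [:: 13; 16; 14; 24; 2]; [:: 28; 2; 29; 10; 17]; [:: 14; 17; 0; 25; 3]; [:: 29; 3; 15; 11; 18]; [:: 0; 16;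 5; 26; 6]; [:: 15; 2; 20; 12; 21]; [:: 1; 17; 6; 27; 7]; [:: 16; 3; 21; 13; 22]; [:: 2; 18; 7; 28; 8]; [:: 17; 4; 22; 14; 23]; [:: 3; 19; 8; 29; 9]; [:: 18; 5; 23; 0; 24]; [:: 4; 20; 9; 15; 10]; [:: 19; 6; 24; 1; 25]; [:: 5; 21; 10; 16; 11]; [:: 20; 7; 25; 2; 26]; [:: 6; 22; 11; 17; 12]; [:: 21; 8; 26; 3; 27]; [:: 7; 23; 12; 18; 13]; [:: 22; 9; 27; 4; 28]; [:: 8; 24; 13; 19; 14]; [:: 23; 10; 28; 5; 29]; [:: 9; 25; 14; 20; 0]; [:: 24; 11; 29; 6; 15]; [:: 10; 26; 0; 21; 1]; [:: 25; 12; 15; 7; 16]; [:: 11; 27; 1; 22; 2]; [:: 26; 13; 16; 8; 17]; [:: 12; 28; 2; 23; 3]; [:: 27; 14; 17; 9; 18]; [:: 13; 29; 3; 24; 4]; [:: 28; 0; 18; 10; 19]; [:: 14; 15; 4; 25; 5]; [:: 29; 1; 19; 11; 20]; [:: 0; 5; 17; 20; 7]; [:: 15; 20; 3; 6; 22]; [:: 1; 6; 18; 21; 8]; [:: 16; 21; 4; 7; 23]; [:: 2; 7; 19; 22; 9]; [:: 17; 22; 5; 8; 24]; [:: 3; 8; 20; 23; 10]; [:: 18; 23; 6; 9; 25]; [:: 4; 9; 21; 24; 11]; [:: 19; 24; 7; 10; 26]; [:: 5; 10; 22; 25; 12]; [:: 20; 25; 8; 11; 27]; [:: 6; 11; 23;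 26; 13]; [:: 21; 26; 9; 12; 28]; [:: 7; 12; 24; 27; 14]; [:: 22; 27; 10; 13; 29]; [:: 8; 13; 25; 28; 0]; [:: 23; 28; 11; 14; 15]; [:: 9; 14; 26; 29; 1]; [:: 24; 29; 12; 0; 16]; [:: 10; 0; 27; 15; 2]; [:: 25; 15; 13; 1; 17]; [:: 11; 1; 28; 16; 3]; [:: 26; 16; 14; 2; 18]; [:: 12; 2; 29; 17; 4]; [:: 27; 17; 0; 3; 19]; [:: 13; 3; 15; 18; 5]; [:: 28; 18; 1; 4; 20]; [:: 14; 4; 16; 19; 6]; [:: 29; 19; 2; 5; 21]; [:: 0; 19; 1; 16; 21]; [:: 15; 5; 16; 2; 7]; [:: 1; 20; 2; 17; 22]; [:: 16; 6; 17; 3; 8]; [:: 2; 21; 3; 18; 23]; [:: 17; 7; 18; 4; 9]; [:: 3; 22; 4; 19; 24]; [:: 18; 8; 19; 5; 10]; [:: 4; 23; 5; 20; 25]; [:: 19; 9; 20; 6; 11]; [:: 5; 24; 6; 21; 26]; [:: 20; 10; 21; 7; 12]; [:: 6; 25; 7; 22; 27]; [:: 21; 11; 22; 8; 13]; [:: 7; 26; 8; 23; 28]; [:: 22; 12; 23; 9; 14]; [:: 8; 27; 9; 24; 29]; [:: 23; 13; 24; 10; 0]; [:: 9; 28; 10; 25; 15]; [:: 24; 14; 25; 11; 1]; [:: 10; 29; 11; 26; 16]; [:: 25; 0; 26; 12; 2]; [:: 11; 15; 12; 27; 17]; [:: 26; 1; 27; 13; 3]; [:: 12; 16; 13; 28;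 18]; [:: 27; 2; 28; 14; 4]; [:: 13; 17; 14; 29; 19]; [:: 28; 3; 29; 0; 5]; [:: 14; 18; 0; 15; 20]; [:: 29; 4; 15; 1; 6]; [:: 0; 7; 20; 23; 6]; [:: 15; 22; 6; 9; 21]; [:: 1; 8; 21; 24; 7]; [:: 16; 23; 7; 10; 22]; [:: 2; 9; 22; 25; 8]; [:: 17; 24; 8; 11; 23]; [:: 3; 10; 23; 26; 9]; [:: 18; 25; 9; 12; 24]; [:: 4; 11; 24; 27; 10]; [:: 19; 26; 10; 13; 25]; [:: 5; 12; 25; 28; 11]; [:: 20; 27; 11; 14; 26]; [:: 6; 13; 26; 29; 12]; [:: 21; 28; 12; 0; 27]; [:: 7; 14; 27; 15; 13]; [:: 22; 29; 13; 1; 28]; [:: 8; 0; 28; 16; 14]; [:: 23; 15; 14; 2; 29]; [:: 9; 1; 29; 17; 0]; [:: 24; 16; 0; 3; 15]; [:: 10; 2; 15; 18; 1]; [:: 25; 17; 1; 4; 16]; [:: 11; 3; 16; 19; 2]; [:: 26; 18; 2; 5; 17]; [:: 12; 4; 17; 20; 3]; [:: 27; 19; 3; 6; 18]; [:: 13; 5; 18; 21; 4]; [:: 28; 20; 4; 7; 19]; [:: 14; 6; 19; 22; 5]; [:: 29; 21; 5; 8; 20]; [:: 0; 17; 19; 8; 11]; [:: 15; 3; 5; 23; 26]; [:: 1; 18; 20; 9; 12]; [:: 16; 4; 6; 24; 27]; [:: 2; 19; 21; 10; 13]; [:: 17; 5; 7; 25; 28]; [:: 3; 20; 22; 11; 14];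 [:: 18; 6; 8; 26; 29]; [:: 4; 21; 23; 12; 0]; [:: 19; 7; 9; 27; 15]; [:: 5; 22; 24; 13; 1]; [:: 20; 8; 10; 28; 16]; [:: 6; 23; 25; 14; 2]; [:: 21; 9; 11; 29; 17]; [:: 7; 24; 26; 0; 3]; [:: 22; 10; 12; 15; 18]; [:: 8; 25; 27; 1; 4]; [:: 23; 11; 13; 16; 19]; [:: 9; 26; 28; 2; 5]; [:: 24; 12; 14; 17; 20]; [:: 10; 27; 29; 3; 6]; [:: 25; 13; 0; 18; 21]; [:: 11; 28; 15; 4; 7]; [:: 26; 14; 1; 19; 22]; [:: 12; 29; 16; 5; 8]; [:: 27; 0; 2; 20; 23]; [:: 13; 15; 17; 6; 9]; [:: 28; 1; 3; 21; 24]; [:: 14; 16; 18; 7; 10]; [:: 29; 2; 4; 22; 25]; [:: 0; 2; 26; 29; 3]; [:: 15; 17; 12; 0; 18]; [:: 1; 3; 27; 15; 4]; [:: 16; 18; 13; 1; 19]; [:: 2; 4; 28; 16; 5]; [:: 17; 19; 14; 2; 20]; [:: 3; 5; 29; 17; 6]; [:: 18; 20; 0; 3; 21]; [:: 4; 6; 15; 18; 7]; [:: 19; 21; 1; 4; 22]; [:: 5; 7; 16; 19; 8]; [:: 20; 22; 2; 5; 23]; [:: 6; 8; 17; 20; 9]; [:: 21; 23; 3; 6; 24]; [:: 7; 9; 18; 21; 10]; [:: 22; 24; 4; 7; 25]; [:: 8; 10; 19; 22; 11]; [:: 23; 25; 5; 8; 26]; [:: 9; 11; 20; 23; 12]; [::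 24; 26; 6; 9; 27]; [:: 10; 12; 21; 24; 13]; [:: 25; 27; 7; 10; 28]; [:: 11; 13; 22; 25; 14]; [:: 26; 28; 8; 11; 29]; [:: 12; 14; 23; 26; 0]; [:: 27; 29; 9; 12; 15]; [:: 13; 0; 24; 27; 1]; [:: 28; 15; 10; 13; 16]; [:: 14; 1; 25; 28; 2]; [:: 29; 16; 11; 14; 17]].
Lemma good_L53 : good 5 3 L53. Proof. by vm_compute. Qed.
Lemma good_L55 : good 5 5 L55. Proof. by vm_compute. Qed.
Lemma good_L102 : good 10 2 L102. Proof. by vm_compute. Qed.
Lemma good_L152 : good 15 2 L152. Proof. by vm_compute. Qed.

Theorem lemma3p4 :
  forall g n : nat, (g, n) \in [:: (5, 3); (5, 5); (10, 2); (15, 2)] ->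
  exists (P : {set {set 'I_(g * n)}}) (A : {set {set {set 'I_(g * n)}}}),
    is_CS_K4e g n 0 set0 P A.
Proof.
move=> g n; rewrite !inE => /or4P[]/eqP[-> ->].
- exact: (@main_gen 5 3 14 L53 erefl good_L53).
- exact: (@main_gen 5 5 24 L55 erefl good_L55).
- exact: (@main_gen 10 2 19 L102 erefl good_L102).
- exact: (@main_gen 15 2 29 L152 erefl good_L152).
Qed.
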